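(* Let $k\ge3$, $q=p^e$, and let $S(k,q)=S(k,q;f_3,g_3,\ldots,f_k,g_k)$ where each $g_i$ has zero constant term and $1\le d_g<p$. If at least one of the following two conditions holds, then $S(k,q)$ is connected: (1) the polynomials $1,X,f_3,\ldots,f_k$ are $\mathbb{F}_q$-linearly independent and each $g_i$, $3\le i\le k$, has a nonzero coefficient of $X$; (2) the polynomials $f_3,\ldots,f_k$ are $\mathbb{F}_q$-linearly independent and there exists $j$ with $2\le j\le d_g$ such that each $g_i$, $3\le i\le k$, has a nonzero coefficient of $X^j$.
   Context: For $k\ge3$ and polynomials $f_i,g_i\in\mathbb{F}_q[X]$ ($3\le i\le k$) of degree at most $q-1$ with $g_i(-X)=-g_i(X)$, $S(k,q;f_3,g_3,\ldots,f_k,g_k)$ is the simple graph on vertex set $\mathbb{F}_q^k$ in which $a=(a_1,\ldots,a_k)$ and $b=(b_1,\ldots,b_k)$ are adjacent iff $a_1\ne b_1$ and $b_i-a_i=g_i(b_1-a_1)f_i\!\left(\frac{b_2-a_2}{b_1-a_1}\right)$ for $3\le i\le k$. $d_g=\max_{3\le i\le k}\deg g_i$. *)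

(* Defs.v *)
From HB Require Import structures.
From mathcomp Require Import all_boot all_order all_algebra all_field.
Set Implicit Arguments. Unset Strict Implicit. Unset Printing Implicit Defensive.
Import Order.TTheory GRing.Theory Num.Theory.
Local Open Scope ring_scope.

(* Vertices of S(k,q): row vectors a = (a_1,...,a_k), stored 0-based:
   paper's a_j is (a 0 (j-1)).  Paper index i (3 <= i <= k) is 0-based i' with 2 <= i' < k. *)

(* j-th coordinate (0-based) of a vertex; j < k in all uses below (k >= 3) *)
Definition crd (F : fieldType) (k : nat) (a : 'rV[F]_k) (j : nat) : F :=
  odflt 0 (omap (a 0) (insub j : option 'I_k)).

Definition S_rel (F : finFieldType) (k : nat) (f g : 'I_k -> {poly F}) : rel 'rV[F]_k :=
  fun a b =>
    (crd b 0 != crd a 0) &&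
    [forall i : 'I_k, (2 <= i)%N ==>
      (b 0 i - a 0 i ==
        (g i).[crd b 0 - crd a 0] * (f i).[(crd b 1 - crd a 1) / (crd b 0 - crd a 0)])].

Definition S_connected (F : finFieldType) (k : nat) (f g : 'I_k -> {poly F}) : Prop :=
  forall a b : 'rV[F]_k, connect (S_rel f g) a b.

Definition lin_indep (F : fieldType) (I : finType) (P : pred I) (v : I -> {poly F}) : Prop :=
  forall c : I -> F, \sum_(i | P i) c i *: v i = 0 -> forall i, P i -> c i = 0.

(* d_g = max_{3<=i<=k} deg g_i  (deg 0 taken as 0) *)
Definition d_g (F : fieldType) (k : nat) (g : 'I_k -> {poly F}) : nat :=
  \max_(i < k | (2 <= i)%N) (size (g i)).-1.

(* Main.v *)
Require Import Defs.
From HB Require Import structures.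
From mathcomp Require Import all_boot all_order all_algebra all_field.
From mathcomp Require Import ring.
Set Implicit Arguments. Unset Strict Implicit. Unset Printing Implicit Defensive.
Import Order.TTheory GRing.Theory Num.Theory.
Local Open Scope ring_scope.

Section Span.
Variables (F : fieldType) (k : nat).
Variable H : 'rV[F]_k -> Prop.
Hypothesis H0 : H 0.
Hypothesis HD : forall u v, H u -> H v -> H (u + v).

Lemma H_sum (I : Type) (r : seq I) (P : pred I) (G : I -> 'rV_k) :
  (forall i, P i -> H (G i)) -> H (\sum_(i <- r | P i) G i).
Proof. by move=> HG; elim/big_ind: _ => //; apply: HD. Qed.

Lemma span_all (I : finType) (R : I -> 'rV[F]_k) :
  (forall y i, H (y *: R i)) ->
  (forall r : 'rV[F]_k, (forall i, \sum_c R i 0 c * r 0 c = 0) -> r = 0) ->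
  forall v, H v.
Proof.
move=> HR Hker v.
pose M : 'M[F]_(#|I|, k) := \matrix_(i, c) R (enum_val i) 0 c.
have fr : row_free M^T.
  rewrite -kermx_eq0; apply/negP => /negP /rowV0Pn [w /sub_kermxP wM wnz].
  case/negP: wnz; apply/eqP; apply: Hker => i.
  have := congr1 (fun A : 'M_(1, #|I|) => A 0 (enum_rank i)) wM.
  rewrite !mxE => h; apply: etrans h; apply: eq_bigr => c _.
  by rewrite !mxE enum_rankK mulrC.
have : row_full M by rewrite /row_full -mxrank_tr.
case/row_fullP => B BM.
have -> : v = (v *m B) *m M by rewrite -mulmxA BM mulmx1.
rewrite mulmx_sum_row; apply: H_sum => i _.
have -> : row i M = R (enum_val i) by apply/rowP => c; rewrite !mxE.
exact: HR.
Qed.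
End Span.
Section PolyDiff.
Variable F : fieldType.
Implicit Types (P Q : {poly F}) (h x : F).

Lemma XaddC_top h i : (('X + h%:P) ^+ i)`_i = 1 /\
  forall j, (i < j)%N -> (('X + h%:P) ^+ i)`_j = 0.
Proof.
elim: i => [|i [IH1 IH2]].
  rewrite expr0 coefC eqxx; split=> // -[|j] //= _; by rewrite coef1.
rewrite exprSr mulrDr; split.
  by rewrite coefD coefMX coefMC /= IH1 IH2 // mul0r addr0.
move=> [|j] //= hj; rewrite coefD coefMX coefMC /= IH2 ?mul0r ?addr0 //.
by rewrite IH2 ?mul0r ?addr0 //; apply: ltnW.
Qed.

Lemma XaddC_sub h i : (('X + h%:P) ^+ i.+1)`_i = i.+1%:R * h.
Proof.
elim: i => [|i IH].
  by rewrite expr1 coefD coefX coefC /= add0r mul1r.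
rewrite exprSr mulrDr coefD coefMX coefMC /= IH (XaddC_top h i.+1).1.
by rewrite -mulrDl -[in RHS]addn1 natrD.
Qed.

Lemma coef_comp_wide P q n N : (size P <= N)%N ->
  (P \Po q)`_n = \sum_(i < N) P`_i * (q ^+ i)`_n.
Proof.
move=> sz; rewrite coef_comp_poly (big_ord_widen N (fun i => P`_i * (q ^+ i)`_n) sz) big_mkcond.
apply: eq_bigr => i _; case: ifP => // /negbT; rewrite -leqNgt => hi.
by rewrite (leq_sizeP _ _ (leqnn _)) // mul0r.
Qed.

Lemma comp_coef_n P n h : (size P <= n.+2)%N ->
  (P \Po ('X + h%:P))`_n = P`_n + n.+1%:R * h * P`_n.+1.
Proof.
move=> sz; rewrite (coef_comp_wide _ _ sz) !big_ord_recr /= big1.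
  by rewrite add0r (XaddC_top h n).1 XaddC_sub mulr1 [_ * (_ * h)]mulrC.
by move=> i _; rewrite (XaddC_top h i).2 ?mulr0.
Qed.

Lemma comp_coef_Sn P n h : (size P <= n.+2)%N ->
  (P \Po ('X + h%:P))`_n.+1 = P`_n.+1.
Proof.
move=> sz; rewrite (coef_comp_wide _ _ sz) big_ord_recr /= big1.
  by rewrite add0r (XaddC_top h n.+1).1 mulr1.
by move=> i _; rewrite (XaddC_top h i).2 ?mulr0.
Qed.

Lemma diff_size P n h : (size P <= n.+2)%N ->
  (size (P \Po ('X + h%:P) - P)%R <= n.+1)%N.
Proof.
move=> sz; apply/leq_sizeP => j hj; rewrite coefB.
case: (ltngtP j n.+1) => [|hj2|->]; first by rewrite ltnNge hj.
  have sz2 : (size (P \Po ('X + h%:P)) <= n.+2)%N by rewrite size_comp_poly2 ?size_XaddC.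
  by rewrite (leq_sizeP _ _ sz) // (leq_sizeP _ _ sz2) // subrr.
by rewrite (comp_coef_Sn h sz) subrr.
Qed.

Lemma diff_horner P h x :
  (P \Po ('X + h%:P) - P).[x] = P.[x + h] - P.[x].
Proof. by rewrite hornerD hornerN horner_comp hornerD hornerX hornerC. Qed.

End PolyDiff.

Section Extract.
Variables (F : fieldType) (p : nat) (k : nat).
Hypothesis Hp : p \in [pchar F].
Variable H : 'rV[F]_k -> Prop.
Hypothesis H0 : H 0.
Hypothesis HD : forall u v, H u -> H v -> H (u + v).
Hypothesis HN : forall u, H u -> H (- u).

Definition pf (P : 'I_k -> {poly F}) x : 'rV[F]_k := \row_c (P c).[x].
Definition tc (P : 'I_k -> {poly F}) j : 'rV[F]_k := \row_c (P c)`_j.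

Lemma natr_neq0 n : (0 < n < p)%N -> (n%:R : F) != 0.
Proof.
case/andP=> n0 np; rewrite -(dvdn_pcharf Hp); apply/negP => /(dvdn_leq n0).
by rewrite leqNgt np.
Qed.

Lemma top n : forall P : 'I_k -> {poly F}, (forall c, size (P c) <= n.+2)%N ->
  (forall x, H (pf P x)) -> (n.+1 < p)%N -> forall y, H (y *: tc P n.+1).
Proof.
elim: n => [|n IH] P sz HP np y.
  have -> : y *: tc P 1 = pf P y + - pf P 0.
    apply/rowP => c; rewrite !mxE !(horner_coef_wide _ (sz c)) !big_ord_recr.
    rewrite !big_ord0 /= !expr0 !expr1 !mulr1 mulr0; ring.
  by apply: HD; [|apply: HN].
pose h : F := (n.+2%:R)^-1.
pose Q := fun c => P c \Po ('X + h%:P) - P c.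
have nz : (n.+2%:R : F) != 0 by apply: natr_neq0.
have -> : tc P n.+2 = tc Q n.+1.
  apply/rowP => c; rewrite !mxE coefB comp_coef_n // /h mulfV // mul1r.
  by rewrite addrC addKr.
apply: IH => //; last exact: ltnW.
  by move=> c; apply: diff_size.
move=> x; have -> : pf Q x = pf P (x + h) + - pf P x.
  by apply/rowP => c; rewrite !mxE diff_horner.
by apply: HD; [|apply: HN].
Qed.

Lemma allc m : forall P : 'I_k -> {poly F}, (forall c, size (P c) <= m.+1)%N ->
  (forall x, H (pf P x)) -> (m < p)%N ->
  forall j, (0 < j <= m)%N -> forall y, H (y *: tc P j).
Proof.
elim: m => [|m IH] P sz HP mp j; first by case: j => [|[]].
case/andP => j0 jm y.
have Ht := top sz HP mp.
case: (eqVneq j m.+1) => [->|jne]; first exact: Ht.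
pose P' := fun c => P c - (P c)`_m.+1 *: 'X^(m.+1).
have -> : tc P j = tc P' j.
  by apply/rowP => c; rewrite !mxE coefB coefZ coefXn (negbTE jne) mulr0 subr0.
apply: IH => //; last 2 first.
- exact: ltnW.
- by rewrite j0 -ltnS ltn_neqAle jne.
- move=> c; apply/leq_sizeP => i hi; rewrite coefB coefZ coefXn.
  case: (eqVneq i m.+1) => [->|ine]; first by rewrite mulr1 subrr.
  rewrite mulr0 subr0 (leq_sizeP _ _ (sz c)) //.
  by rewrite ltn_neqAle eq_sym ine.
- move=> x; have -> : pf P' x = pf P x + - (x ^+ m.+1 *: tc P m.+1).
    apply/rowP => c; rewrite !mxE hornerD hornerN hornerZ hornerXn.
    by rewrite mulrC.
  by apply: HD; [|apply: HN].
Qed.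
End Extract.

Section Main.
Variables (F : finFieldType) (k : nat) (f g : 'I_k -> {poly F}).

Lemma crdE (a : 'rV[F]_k) (j : 'I_k) : crd a j = a 0 j.
Proof. by rewrite /crd; case: insubP => [j' _ /val_inj -> //|]; rewrite ltn_ord. Qed.

Lemma crdD (a b : 'rV[F]_k) j : crd (a + b) j = crd a j + crd b j.
Proof. by rewrite /crd; case: insubP => [j' _ _|_] /=; rewrite ?mxE ?addr0. Qed.

Lemma S_rel_shift a b c : S_rel f g (a + c) (b + c) = S_rel f g a b.
Proof.
have E j : crd (b + c) j - crd (a + c) j = crd b j - crd a j.
  by rewrite !crdD opprD addrACA subrr addr0.
have E2 (i : 'I_k) : (b + c) 0 i - (a + c) 0 i = b 0 i - a 0 i.
  by rewrite !mxE opprD addrACA subrr addr0.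
rewrite /S_rel !E.
rewrite !crdD (inj_eq (addIr _)); congr (_ && _); apply: eq_forallb => i; by rewrite E2.
Qed.

Lemma connect_shift a b c : connect (S_rel f g) a b -> connect (S_rel f g) (a + c) (b + c).
Proof.
case/connectP => s; elim: s a => [|x s IH] a /= => [_ ->|/andP[ax px] hb].
  exact: connect0.
apply: connect_trans (IH x px hb).
by apply: connect1; rewrite S_rel_shift.
Qed.

Definition Hc v := connect (S_rel f g) 0 v.

Lemma Hc0 : Hc 0. Proof. exact: connect0. Qed.

Lemma HcD u v : Hc u -> Hc v -> Hc (u + v).
Proof.
move=> hu hv; apply: connect_trans hu _.
by have := connect_shift u hv; rewrite add0r addrC.
Qed.

Lemma HcN (p : nat) : p \in [pchar F] -> forall u, Hc u -> Hc (- u).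
Proof.
move=> Hp u hu.
have -> : - u = u *+ p.-1.
  apply/eqP; rewrite eq_sym -subr_eq0 opprK -mulrSr prednK ?prime_gt0 //.
    by rewrite -scaler_nat (pcharf0 Hp) scale0r.
  exact: pcharf_prime Hp.
elim: p.-1 => [|n IHn]; first exact: Hc0.
by rewrite mulrS; apply: HcD.
Qed.

Definition Pg (u : F) (c : 'I_k) : {poly F} :=
  if c == 0%N :> nat then 'X else if c == 1%N :> nat then u *: 'X else (f c).[u] *: g c.

Lemma tcE u j c : tc (Pg u) j 0 c =
  if c == 0%N :> nat then (j == 1%N)%:R else if c == 1%N :> nat then u * (j == 1%N)%:R
  else (f c).[u] * (g c)`_j.
Proof. by rewrite mxE /Pg; case: ifP => _; [|case: ifP => _]; rewrite ?coefZ ?coefX. Qed.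


Lemma crd0 j : crd (0 : 'rV[F]_k) j = 0.
Proof. by rewrite /crd; case: insubP => [j' _ _|_] /=; rewrite ?mxE. Qed.

Lemma two_le (c : 'I_k) : c != 0%N :> nat -> c != 1%N :> nat -> (2 <= c)%N.
Proof. by case: c => [[|[|n]]]. Qed.

Lemma pfE u x c : pf (Pg u) x 0 c =
  if c == 0%N :> nat then x else if c == 1%N :> nat then u * x
  else (f c).[u] * (g c).[x].
Proof. by rewrite mxE /Pg; case: ifP => _; [|case: ifP => _]; rewrite ?hornerZ ?hornerX. Qed.

Lemma Hgen (Hk : (3 <= k)%N) (Hconst : forall i : 'I_k, (2 <= i)%N -> (g i)`_0 = 0) u x :
  Hc (pf (Pg u) x).
Proof.
have [->|x0] := eqVneq x 0.
  have -> : pf (Pg u) 0 = 0; last exact: Hc0.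
  apply/rowP => c; rewrite pfE mxE; case: ifP => // c0; case: ifP => c1.
    by rewrite mulr0.
  by rewrite horner_coef0 Hconst ?mulr0 // two_le ?c0 ?c1.
apply: connect1.
have k0 : (0 < k)%N by apply: leq_trans Hk.
have k1 : (1 < k)%N by apply: leq_trans Hk.
rewrite /S_rel !crd0 !subr0 (crdE _ (Ordinal k0)) (crdE _ (Ordinal k1)) !pfE /= x0 /=.
rewrite mulfK //; apply/forallP => i; apply/implyP => i2.
rewrite pfE (_ : (0 : 'rV[F]_k) 0 i = 0) ?mxE // subr0.
case: ifP => [/eqP i0|_]; first by rewrite i0 in i2.
case: ifP => [/eqP i1|_]; first by rewrite i1 in i2.
by rewrite mulrC.
Qed.

End Main.

Lemma size_sum_le (F : fieldType) (I : finType) (P : pred I) (G : I -> {poly F}) N :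
  (forall i, P i -> size (G i) <= N)%N -> (size (\sum_(i | P i) G i)%R <= N)%N.
Proof.
move=> hG; elim/big_ind: _ => //; first by rewrite size_poly0.
by move=> x y hx hy; apply: leq_trans (size_polyD _ _) _; rewrite geq_max hx hy.
Qed.

Theorem mainTheorem9 (F : finFieldType) (p : nat) (k : nat)
  (f g : 'I_k -> {poly F})
  (Hp : p \in [pchar F])
  (Hk : (3 <= k)%N)
  (Hdegf : forall i : 'I_k, (2 <= i)%N -> (size (f i) <= #|F|)%N)
  (Hdegg : forall i : 'I_k, (2 <= i)%N -> (size (g i) <= #|F|)%N)
  (Hodd : forall i : 'I_k, (2 <= i)%N -> g i \Po (- 'X) = - g i)
  (Hconst : forall i : 'I_k, (2 <= i)%N -> (g i)`_0 = 0)
  (Hdg : (1 <= d_g g < p)%N) :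
  ( lin_indep predT (fun i : 'I_k =>
        if i == 0%N :> nat then 1 else if i == 1%N :> nat then 'X else f i)
    /\ (forall i : 'I_k, (2 <= i)%N -> (g i)`_1 != 0) )
  \/
  ( lin_indep (fun i : 'I_k => (2 <= i)%N) f
    /\ exists j : nat, (2 <= j <= d_g g)%N /\
         forall i : 'I_k, (2 <= i)%N -> (g i)`_j != 0 ) ->
  S_connected f g.
Proof.
move=> Hcase a b.
case/andP: Hdg => D1 Dp.
have Hsz : forall u c, (size (Pg f g u c) <= (d_g g).+1)%N.
  move=> u c; rewrite /Pg; case: ifP => c0; first by rewrite size_polyX.
  case: ifP => c1; first by apply: leq_trans (size_scale_leq _ _) _; rewrite size_polyX.
  apply: leq_trans (size_scale_leq _ _) _.
  have c2 : (2 <= c)%N by rewrite two_le ?c0 ?c1.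
  apply: leq_trans (leqSpred _) _; rewrite ltnS.
  rewrite /d_g; exact: (@leq_bigmax_cond _ (fun i : 'I_k => (1 < i)%N) (fun i => (size (g i)).-1) c c2).
have HA : forall u j, (0 < j <= d_g g)%N -> forall y, Hc f g (y *: tc (Pg f g u) j).
  move=> u j hj y.
  exact: (allc Hp (@HcD _ _ f g) (HcN Hp (f:=f) (g:=g)) (Hsz u) (Hgen f Hk Hconst u) Dp hj y).
have FX : (size ('X : {poly F}) <= #|F|)%N.
  rewrite size_polyX; apply/card_gt1P; exists 0, 1; split => //. by rewrite eq_sym oner_neq0.
have k0 : (0 < k)%N by apply: leq_trans Hk.
have k1 : (1 < k)%N by apply: leq_trans Hk.
pose c0 : 'I_k := Ordinal k0.
pose c1 : 'I_k := Ordinal k1.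
suff Hall : forall v, Hc f g v.
  by have := connect_shift a (Hall (b - a)); rewrite add0r subrK.
case: Hcase => [[Hli Hg1] | [Hli [j [Hj Hgj]]]].
- apply: (span_all (Hc0 f g) (@HcD _ _ f g) (R := fun u => tc (Pg f g u) 1)).
    by move=> y u; apply: HA; rewrite D1.
  move=> r hr.
  pose cf (c : 'I_k) := if c == 0%N :> nat then r 0 c else if c == 1%N :> nat then r 0 c
                        else (g c)`_1 * r 0 c.
  have Q0 : \sum_(i | predT i) cf i *: (fun i : 'I_k =>
        if i == 0%N :> nat then 1 else if i == 1%N :> nat then 'X else f i) i = 0.
    apply: (roots_geq_poly_eq0 (rs := enum F)) (enum_uniq _) _.
      apply/allP => u _; rewrite /root horner_sum; apply/eqP; rewrite -[RHS](hr u).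
      apply: eq_bigr => c _; rewrite hornerZ tcE /cf.
      case: ifP => _; first by rewrite hornerC /=; ring.
      case: ifP => _; first by rewrite hornerX /=; ring.
      ring.
    rewrite -cardE; apply: size_sum_le => c _; apply: leq_trans (size_scale_leq _ _) _.
    case: ifP => c0'; first by rewrite size_poly1; apply/card_gt0P; exists 0.
    case: ifP => c1' //; apply: Hdegf; by rewrite two_le ?c0' ?c1'.
  have hcf := Hli cf Q0.
  apply/rowP => c; rewrite mxE; have := hcf c isT; rewrite /cf.
  case: ifP => // c0'; case: ifP => // c1' /eqP.
  rewrite mulf_eq0 (negbTE (Hg1 c _)) ?two_le ?c0' ?c1' //=; by move/eqP.
- case/andP: Hj => j2 jD.
  have j1 : (j == 1%N) = false by case: j j2 {jD Hgj} => [|[]].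
  apply: (span_all (Hc0 f g) (@HcD _ _ f g) (I := (F * bool)%type)
     (R := fun ub => if ub.2 then tc (Pg f g ub.1) j else tc (Pg f g ub.1) 1)).
    move=> y [u []] /=; apply: HA; first by rewrite (leq_trans _ j2).
    by rewrite D1.
  move=> r hr.
  have hr2 : forall c : 'I_k, (2 <= c)%N -> r 0 c = 0.
    pose cf (c : 'I_k) := (g c)`_j * r 0 c.
    have Q0 : \sum_(i : 'I_k | (2 <= i)%N) cf i *: f i = 0.
      apply: (roots_geq_poly_eq0 (rs := enum F)) (enum_uniq _) _.
        apply/allP => u _; rewrite /root horner_sum; apply/eqP; rewrite -[RHS](hr (u, true)) /=.
        rewrite [LHS]big_mkcond; apply: eq_bigr => c _; rewrite tcE /cf.
        case: ifP => c2.
          rewrite (_ : (c == 0%N :> nat) = false); last by apply/negbTE; apply: contraTneq c2 => ->.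
          rewrite (_ : (c == 1%N :> nat) = false); last by apply/negbTE; apply: contraTneq c2 => ->.
          rewrite hornerZ; ring.
        case: ifP => c0'; first by rewrite j1 mul0r.
        case: ifP => c1'; first by rewrite j1 mulr0 mul0r.
        by rewrite two_le ?c0' ?c1' in c2.
      rewrite -cardE; apply: size_sum_le => c c2; apply: leq_trans (size_scale_leq _ _) _.
      exact: Hdegf.
    move=> c c2; have := Hli cf Q0 c c2; rewrite /cf => /eqP.
    by rewrite mulf_eq0 (negbTE (Hgj c c2)) /= => /eqP.
  have e u : r 0 c0 + u * r 0 c1 = 0.
    rewrite -[RHS](hr (u, false)) /= (bigD1 c0) // (bigD1 c1) // big1 /=.
      by rewrite !tcE /= addr0; ring.
    move=> c /andP [cn1 cn0]; rewrite (hr2 c) ?mulr0 //.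
    by apply: two_le; [apply: contra cn1 | apply: contra cn0] => /eqP h; apply/eqP; apply: val_inj.
  have r0 : r 0 c0 = 0 by have := e 0; rewrite mul0r addr0.
  have r1 : r 0 c1 = 0 by have := e 1; rewrite mul1r r0 add0r.
  apply/rowP => c; rewrite mxE.
  case: (eqVneq (c : nat) 0%N) => cz; first by rewrite (_ : c = c0) // ; apply: val_inj.
  case: (eqVneq (c : nat) 1%N) => co; first by rewrite (_ : c = c1) // ; apply: val_inj.
  by apply: hr2; rewrite two_le.
Qed.
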